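(* Let $(X,d)$ be a pointed metric space and let $((x_i,y_i))_{i\in I}$ be a Lipschitz interpolating family in $\widetilde X$ for $\mathrm{Lip}_0(X)$ with Lipschitz interpolation constant $M$. The following are equivalent: (i) $((x_i,y_i))_{i\in I}$ has a Beurling set $(f_i)_{i\in I}$ of functions in $\mathrm{Lip}_0(X)$. (ii) For each real Banach space $E$ there exists a bounded linear operator $R_E:\ell_\infty(I,E)\to\mathrm{Lip}_0(X,E)$ with $\|R_E\|\leq M$ and $T_E\circ R_E=\mathrm{Id}_{\ell_\infty(I,E)}$. Moreover, in that case, for every Banach space $E$ the family $((x_i,y_i))_{i\in I}$ is Lipschitz interpolating for $\mathrm{Lip}_0(X,E)$ and $M_E=M$.
   Context: All spaces are real. $(X,d)$ is a metric space with base point $0$, $\widetilde{X}=\{(x,y)\in X\times X: x\neq y\}$. For a Banach space $E$, $\mathrm{Lip}_0(X,E)$ is the Banach space of Lipschitz $f:X\to E$ with $f(0)=0$, normed by $\|f\|=\sup_{(x,y)\in\widetilde X}\|f(x)-f(y)\|/d(x,y)$; $\mathrm{Lip}_0(X)=\mathrm{Lip}_0(X,\mathbb R)$. $\ell_\infty(I,E)$ is the space of bounded families in $E$ with the sup norm. For a family $((x_i,y_i))_{i\in I}$ in $\widetilde X$, $T_E:\mathrm{Lip}_0(X,E)\to\ell_\infty(I,E)$ is $T_E(f)=\big((f(x_i)-f(y_i))/d(x_i,y_i)\big)_{i\in I}$, and $T=T_{\mathbb R}$. The family is Lipschitz interpolating for $\mathrm{Lip}_0(X,E)$ if $T_E$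 is surjective; then $M_E=\inf\{K>0:\forall v\in\ell_\infty(I,E),\ \|v\|_\infty\le1,\ \exists f\in\mathrm{Lip}_0(X,E),\ \|f\|\le K,\ T_E(f)=v\}$. The Lipschitz interpolation constant for $\mathrm{Lip}_0(X)$ is $M=\inf\{K\geq 1: \forall \alpha\in\ell_\infty(I), \|\alpha\|_\infty\le1,\ \exists f\in\mathrm{Lip}_0(X),\ \|f\|\le K,\ T(f)=\alpha\}$. A Beurling set of functions in $\mathrm{Lip}_0(X)$ for the family is a family $(f_i)_{i\in I}$ of functions $f_i:X\to\mathbb R$ with $f_i(0)=0$, $(f_i(x_j)-f_i(y_j))/d(x_j,y_j)=\delta_{ij}$ for all $i,j\in I$, and $\sup_{(x,y)\in\widetilde X}\sum_{i\in I}|f_i(x)-f_i(y)|/d(x,y)\leq M$. *)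

(* Defs.v *)
From HB Require Import structures.
From mathcomp Require Import all_boot all_order all_algebra.
From mathcomp Require Import all_classical all_reals all_analysis.
Set Implicit Arguments. Unset Strict Implicit. Unset Printing Implicit Defensive.
Import Order.TTheory GRing.Theory Num.Theory.
Import numFieldNormedType.Exports.
Local Open Scope classical_set_scope.
Local Open Scope ring_scope.

Section LipInterp.
Context {R : realType} {X : Type} (d : X -> X -> R) (x0 : X).

Definition is_metric : Prop :=
  (forall a b, 0 <= d a b) /\ (forall a b, d a b = 0 <-> a = b) /\
  (forall a b, d a b = d b a) /\ (forall a b c, d a c <= d a b + d b c).

Section Vec.
Context (E : normedModType R).

Definition lip0 (f : X -> E) : Prop :=
  f x0 = 0 /\ exists C : R, forall a b, `|f a - f b| <= C * d a b.

Definition lipnorm (f : X -> E) : R :=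
  sup [set r | exists a b, a <> b /\ r = `|f a - f b| / d a b].

Context {I : Type}.

Definition bdd_family (v : I -> E) : Prop := exists C : R, forall i, `|v i| <= C.

Definition linfnorm (v : I -> E) : R := sup [set `|v i| | i in setT].

Context (x y : I -> X).

Definition TE (f : X -> E) : I -> E :=
  fun i => (d (x i) (y i))^-1 *: (f (x i) - f (y i)).

Definition lip_interpolating : Prop :=
  forall v : I -> E, bdd_family v -> exists f : X -> E, lip0 f /\ TE f = v.

Definition interp_constE : R :=
  inf [set K : R | 0 < K /\
        forall v : I -> E, bdd_family v -> linfnorm v <= 1 ->
          exists f : X -> E, lip0 f /\ lipnorm f <= K /\ TE f = v].

Definition opnorm (RE : (I -> E) -> (X -> E)) : R :=
  sup [set lipnorm (RE v) | v in [set v | bdd_family v /\ linfnorm v <= 1]].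

Definition has_linear_extension (M : R) : Prop :=
  exists RE : (I -> E) -> (X -> E),
    (forall v, bdd_family v -> lip0 (RE v)) /\
    (forall (a : R) v w, bdd_family v -> bdd_family w ->
        RE (fun i => a *: v i + w i) = (fun p => a *: RE v p + RE w p)) /\
    (exists C : R, forall v, bdd_family v -> lipnorm (RE v) <= C * linfnorm v) /\
    opnorm RE <= M /\
    (forall v, bdd_family v -> TE (RE v) = v).

End Vec.

Section Scalar.
Context {I : choiceType} (x y : I -> X).

Definition interp_const : R :=
  inf [set K : R | 1 <= K /\
        forall alpha : I -> R^o, bdd_family alpha -> linfnorm alpha <= 1 ->
          exists f : X -> R^o, lip0 f /\ lipnorm f <= K /\ TE x y f = alpha].

Definition beurling_set (M : R) : Prop :=
  exists f : I -> X -> R,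
    (forall i, f i x0 = 0) /\
    (forall i j, (f i (x j) - f i (y j)) / d (x j) (y j) = (i == j)%:R) /\
    (forall a b, a <> b ->
       (esum setT (fun i => (`|f i a - f i b| / d a b)%:E) <= M%:E)%E).

End Scalar.
End LipInterp.

(* Main.v *)
Require Import Defs.
From HB Require Import structures.
From mathcomp Require Import all_boot all_order all_algebra finmap.
From mathcomp Require Import all_classical all_reals all_analysis.
From mathcomp Require Import ring lra.
Import Order.TTheory GRing.Theory Num.Theory.
Import numFieldNormedType.Exports.
Local Open Scope classical_set_scope.
Local Open Scope ring_scope.
Set Implicit Arguments. Unset Strict Implicit. Unset Printing Implicit Defensive.

Definition totally {I : choiceType} : set_system {fset I} :=
  filter_from setT (fun A => [set B | (A `<=` B)%fset]).

Instance totally_filter {I : choiceType} : ProperFilter (@totally I).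
Proof.
eapply filter_from_proper; last by move=> A _; exists A; rewrite /= fsubset_refl.
apply: filter_fromT_filter; first by exists fset0.
by move=> A B /=; exists (A `|` B)%fset => P /=; rewrite fsubUset => /andP[].
Qed.
Section Sum.
Context {R : realType} {I : choiceType} {E : completeNormedModType R}.
Definition psum (u : I -> E) (F : {fset I}) : E := \sum_(i <- F) u i.
Definition tsum (u : I -> E) : E := lim (psum u @ totally).

Lemma psum_cvg (u : I -> E) (B : R) :
  (forall F : {fset I}, \sum_(i <- F) `|u i| <= B) -> cvg (psum u @ totally).
Proof.
move=> uB; apply/cauchy_cvgP; apply: cauchy_exP => eps eps0.
pose S := [set \sum_(i <- F) `|u i| | F in [set: {fset I}]].
have hS : has_sup S.
  split; first by exists (\sum_(i <- fset0) `|u i|); exists fset0.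
  by exists B => _ [F _ <-].
have [_ [F0 _ <-] hF0] := sup_adherent eps0 hS.
exists (psum u F0); exists F0 => // G /= F0G.
rewrite -ball_normE /ball_ /psum (big_fsetID _ (mem F0) G).
have -> : [fset x in G | mem F0 x]%fset = F0.
  apply/fsetP => z; rewrite !inE /=; apply/andP/idP => [[]//|zF]; split=> //.
  exact: (fsubsetP F0G).
rewrite /= opprD addrA subrr add0r normrN.
apply: (le_lt_trans (ler_norm_sum _ _ _)).
have : \sum_(i <- G) `|u i| <= sup S by apply: ub_le_sup; [case: hS|exists G].
rewrite (big_fsetID _ (mem F0) G).
have -> : [fset x in G | mem F0 x]%fset = F0.
  apply/fsetP => z; rewrite !inE /=; apply/andP/idP => [[]//|zF]; split=> //.
  exact: (fsubsetP F0G).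
rewrite /=.
move: hF0; rewrite /= => ? ?; lra.
Qed.
Definition summ (u : I -> E) := exists B, forall F : {fset I}, \sum_(i <- F) `|u i| <= B.

Lemma tsum_cvg u : summ u -> psum u @ totally --> tsum u.
Proof. by case=> B hB; apply: (psum_cvg hB). Qed.

Lemma tsum_lin (a : R) u w : summ u -> summ w ->
  tsum (fun i => a *: u i + w i) = a *: tsum u + tsum w.
Proof.
move=> su sw; apply: norm_cvg_lim.
have -> : psum (fun i => a *: u i + w i) = fun F => a *: psum u F + psum w F.
  by apply: funext => F; rewrite /psum big_split /= scaler_sumr.
apply: cvgD; last exact: tsum_cvg.
by apply: cvgZ; [exact: cvg_cst|exact: tsum_cvg].
Qed.

Lemma tsum_le u (K : R) : summ u -> (forall F, `|psum u F| <= K) -> `|tsum u| <= K.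
Proof.
move=> su hK.
apply: (@closed_cvg _ _ totally _ (fun F => `|psum u F|) (fun x : R => x <= K)).
- exact: closed_le.
- by apply: nearW.
- exact: cvg_norm (tsum_cvg su).
Qed.

Lemma tsum_near u l : (\forall F \near totally, psum u F = l) -> tsum u = l.
Proof. exact: lim_near_cst. Qed.

End Sum.
Section Helpers.
Context {R : realType} {X : Type} (d : X -> X -> R) (hd : is_metric d).

Lemma d_gt0 a b : a <> b -> 0 < d a b.
Proof.
case: hd => d0 [dE _] ab; rewrite lt_neqAle d0 andbT eq_sym.
by apply/eqP => /dE.
Qed.

Lemma d_refl a : d a a = 0.
Proof. by case: hd => _ [dE _]; apply/dE. Qed.

Context {E : normedModType R}.

Lemma lipnorm_ub (f : X -> E) C a b : (forall a b, `|f a - f b| <= C * d a b) ->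
  a <> b -> `|f a - f b| / d a b <= lipnorm d f.
Proof.
move=> hC ab; apply: ub_le_sup; last by exists a, b.
exists C => _ [a' [b' [ab' ->]]].
have hp := d_gt0 ab'.
by rewrite ler_pdivrMr //; exact: hC.
Qed.

Lemma lipnorm_ub' (f : X -> E) C a b : (forall a b, `|f a - f b| <= C * d a b) ->
  `|f a - f b| <= lipnorm d f * d a b.
Proof.
move=> hC; have [->|ab] := pselect (a = b).
  by rewrite subrr normr0 d_refl mulr0.
have hp := d_gt0 ab.
by rewrite -ler_pdivrMr //; exact: lipnorm_ub hC ab.
Qed.

Lemma lipnorm_le (f : X -> E) (K : R) : 0 <= K -> (forall a b, `|f a - f b| <= K * d a b) ->
  lipnorm d f <= K.
Proof.
move=> K0 hK; rewrite /lipnorm.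
set S := [set r | _].
have [[r Sr]|nS] := pselect (S !=set0).
  apply: ge_sup; first by exists r.
  move=> _ [a [b [ab ->]]].
  by rewrite ler_pdivrMr ?hK //; exact: d_gt0.
rewrite (_ : S = set0) ?sup0 //.
by apply/seteqP; split => // z Sz; exfalso; apply: nS; exists z.
Qed.

Context {I : Type}.

Lemma linf_ub (v : I -> E) i : bdd_family v -> `|v i| <= linfnorm v.
Proof.
move=> [C hC]; apply: ub_le_sup; last by exists i.
by exists C => _ [j _ <-].
Qed.

Lemma linf_le (v : I -> E) (K : R) : 0 <= K -> (forall i, `|v i| <= K) -> linfnorm v <= K.
Proof.
move=> K0 hK; rewrite /linfnorm.
set S := [set _ | _ in _].
have [[r Sr]|nS] := pselect (S !=set0).
  by apply: ge_sup; [exists r|move=> _ [j _ <-]].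
rewrite (_ : S = set0) ?sup0 //.
by apply/seteqP; split => // z Sz; exfalso; apply: nS; exists z.
Qed.

Lemma linf_ge0 (v : I -> E) : bdd_family v -> 0 <= linfnorm v.
Proof.
move=> bv; rewrite /linfnorm.
set S := [set _ | _ in _].
have [[_ [i _ _]]|nS] := pselect (S !=set0).
  exact: le_trans (normr_ge0 _) (linf_ub i bv).
rewrite (_ : S = set0) ?sup0 //.
by apply/seteqP; split => // z Sz; exfalso; apply: nS; exists z.
Qed.

Lemma opnorm_ub (RE : (I -> E) -> X -> E) C v :
  (forall v, bdd_family v -> lipnorm d (RE v) <= C * linfnorm v) ->
  bdd_family v -> linfnorm v <= 1 -> lipnorm d (RE v) <= opnorm d RE.
Proof.
move=> RC bv lv; apply: ub_le_sup; last by exists v.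
exists `|C| => _ [w [bw lw] <-]; apply: le_trans (RC w bw) _.
have := linf_ge0 bw; have := ler_norm C; have := normr_ge0 C; nra.
Qed.

End Helpers.

Section Construct.
Context {R : realType} {X : Type} (d : X -> X -> R) (hd : is_metric d) (x0 : X)
  {I : choiceType} (x y : I -> X) (hxy : forall i, x i <> y i) (M : R) (M0 : 0 <= M) (f : I -> X -> R)
  (f0 : forall i, f i x0 = 0)
  (fxy : forall i j, (f i (x j) - f i (y j)) / d (x j) (y j) = (i == j)%:R)
  (fsum : forall a b, a <> b ->
     (esum setT (fun i => (`|f i a - f i b| / d a b)%:E) <= M%:E)%E).

Lemma bsum a b (F : {fset I}) : \sum_(i <- F) `|f i a - f i b| <= M * d a b.
Proof.
have [<-|ab] := pselect (a = b).
  by rewrite big1 ?d_refl ?mulr0 // => i _; rewrite subrr normr0.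
have hp := d_gt0 hd ab.
rewrite -ler_pdivrMr // mulr_suml -lee_fin; apply: le_trans (fsum ab).
rewrite -sumEFin fsbig_seq ?fset_uniq //; apply: esum_ge.
exists [set` F] => //; split => //; exact: finite_fset.
Qed.

Context (E : completeNormedModType R).
Definition REop (v : I -> E) (p : X) : E := tsum (fun i => f i p *: v i).

Lemma sum_bound (v : I -> E) a b (F : {fset I}) : bdd_family v ->
  \sum_(i <- F) `|(f i a - f i b) *: v i| <= M * d a b * linfnorm v.
Proof.
move=> bv.
apply: (@le_trans _ _ (\sum_(i <- F) `|f i a - f i b| * linfnorm v)).
  by apply: ler_sum => i _; rewrite normrZ ler_wpM2l // linf_ub.
by rewrite -mulr_suml ler_wpM2r ?linf_ge0 // bsum.
Qed.

Lemma summ_f (v : I -> E) a b : bdd_family v -> summ (fun i => (f i a - f i b) *: v i).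
Proof. by move=> bv; exists (M * d a b * linfnorm v) => F; exact: sum_bound. Qed.

Lemma summ_p (v : I -> E) p : bdd_family v -> summ (fun i => f i p *: v i).
Proof.
move=> bv; have := summ_f p x0 bv.
by under eq_fun do rewrite f0 subr0.
Qed.

Lemma REop_sub (v : I -> E) a b : bdd_family v ->
  REop v a - REop v b = tsum (fun i => (f i a - f i b) *: v i).
Proof.
move=> bv; have := tsum_lin (-1) (summ_p b bv) (summ_p a bv).
rewrite scaleN1r addrC /REop => <-; congr tsum; apply: funext => i.
by rewrite scaleN1r scalerBl addrC.
Qed.

Lemma REop_lip (v : I -> E) a b : bdd_family v ->
  `|REop v a - REop v b| <= M * linfnorm v * d a b.
Proof.
move=> bv; rewrite REop_sub // mulrAC; apply: tsum_le; first exact: summ_f.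
move=> F; rewrite /psum; apply: le_trans (ler_norm_sum _ _ _) _.
exact: sum_bound.
Qed.

Lemma REop_x0 (v : I -> E) : REop v x0 = 0.
Proof.
apply: tsum_near; apply: nearW => F.
by rewrite /psum big1 // => i _; rewrite f0 scale0r.
Qed.

Lemma REop_lin (a : R) (v w : I -> E) p : bdd_family v -> bdd_family w ->
  REop (fun i => a *: v i + w i) p = a *: REop v p + REop w p.
Proof.
move=> bv bw; rewrite /REop -tsum_lin; [|exact: summ_p|exact: summ_p]; congr tsum; apply: funext => i.
by rewrite scalerDr !scalerA mulrC.
Qed.

Lemma REop_TE (v : I -> E) : bdd_family v -> TE d x y (REop v) = v.
Proof.
move=> bv; apply: funext => j; rewrite /TE REop_sub //.
have dj : d (x j) (y j) != 0.
  by rewrite gt_eqF // d_gt0.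
set dd := d (x j) (y j) in dj *.
have hf : forall i, f i (x j) - f i (y j) = (i == j)%:R * dd.
  by move=> i; rewrite -(fxy i j) divfK.
rewrite (tsum_near (l := dd *: v j)) ?scalerA ?mulVf ?scale1r //.
exists [fset j]%fset => // G /= jG.
have jinG : j \in G by apply: (fsubsetP jG); rewrite inE.
rewrite /psum (big_fsetD1 _ jinG) /= hf eqxx mul1r big1_seq ?addr0 //.
move=> i /andP[_]; rewrite !inE => /andP[ij _].
by rewrite hf (negbTE ij) mul0r scale0r.
Qed.

Lemma REop_lipnorm (v : I -> E) : bdd_family v -> lipnorm d (REop v) <= M * linfnorm v.
Proof.
move=> bv; apply: lipnorm_le => //; first by apply: mulr_ge0 => //; exact: linf_ge0.
by move=> a b; exact: REop_lip.
Qed.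

Lemma beurling_ext : has_linear_extension d x0 E x y M.
Proof.
exists REop; split; [|split; [|split; [|split]]].
- move=> v bv; split; first exact: REop_x0.
  by exists (M * linfnorm v) => a b; exact: REop_lip.
- by move=> a v w bv bw; apply: funext => p; exact: REop_lin.
- by exists M => v bv; exact: REop_lipnorm.
- apply: ge_sup.
    exists (lipnorm d (REop (fun _ : I => (0 : E)))); exists (fun _ => 0) => //.
    split; first by exists 0 => i; rewrite normr0.
    by apply: linf_le => // i; rewrite normr0.
  move=> _ [v [bv lv] <-]; apply: le_trans (REop_lipnorm bv) _.
  by rewrite -[leRHS]mulr1 ler_wpM2l.
- by move=> v bv; exact: REop_TE.
Qed.

End Construct.

Section Extract.
Context {R : realType} {X : Type} (d : X -> X -> R) (hd : is_metric d) (x0 : X)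
  {I : choiceType} (x y : I -> X) (hxy : forall i, x i <> y i) (M : R).

Lemma ext_beurling : has_linear_extension d x0 (R^o) x y M -> beurling_set d x0 x y M.
Proof.
case=> RE [Rlip [Rlin [[C RC] [Ropn RTE]]]].
pose e i := fun j : I => ((i == j)%:R : R^o).
have be : forall i, bdd_family (e i).
  by move=> i; exists 1 => j; rewrite /e; case: eqP; rewrite ?normr1 ?normr0.
have b0 : bdd_family (fun _ : I => (0 : R^o)) by exists 0 => j; rewrite normr0.
have RE0 : RE (fun _ => 0) = fun _ => 0.
  have := Rlin (-1) _ _ b0 b0.
  rewrite (_ : (fun i : I => -1 *: (0 : R^o) + 0) = fun _ => 0); last first.
    by apply: funext => i; rewrite scaler0 addr0.
  by move=> h; apply: funext => p; rewrite h /= scaleN1r addNr.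
have bsum_e : forall (s : I -> R) (l : seq I),
    bdd_family (fun j => (\sum_(i <- l) s i * e i j : R^o)).
  move=> s l; exists (\sum_(i <- l) `|s i|) => j.
  apply: le_trans (ler_norm_sum _ _ _) _; apply: ler_sum => i _.
  rewrite normrM -[leRHS]mulr1 ler_wpM2l //.
  by rewrite /e; case: eqP; rewrite ?normr1 ?normr0.
have expand : forall (s : I -> R) (l : seq I),
    RE (fun j => (\sum_(i <- l) s i * e i j : R^o)) =
    fun p => \sum_(i <- l) s i * RE (e i) p.
  move=> s; elim => [|k l IH].
    under eq_fun do rewrite big_nil.
    by rewrite RE0; apply: funext => p; rewrite big_nil.
  rewrite (_ : (fun j => _) = fun j => s k *: e k j + (\sum_(i <- l) s i * e i j : R^o)).
    rewrite Rlin // IH; apply: funext => p; rewrite big_cons //.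
  by apply: funext => j; rewrite big_cons.
exists (fun i => RE (e i)); split; [|split].
- by move=> i; case: (Rlip _ (be i)).
- move=> i j; have := RTE _ (be i).
  move/(congr1 (fun g => g j)); rewrite /TE /= => h.
  by rewrite mulrC; exact: h.
move=> a b ab.
have dp := d_gt0 hd ab.
rewrite /esum; apply: ge_ereal_sup => _ [Xs [finX _] <-].
rewrite fsbig_finite //= sumEFin lee_fin.
set G := fset_set Xs.
pose s i := if 0 <= RE (e i) a - RE (e i) b then 1 else -1 : R.
pose w := fun j => (\sum_(i <- G) s i * e i j : R^o).
have wb : bdd_family w := bsum_e s G.
have wl : linfnorm w <= 1.
  apply: linf_le => // j; rewrite /w.
  have [jG|jG] := boolP (j \in G).
    rewrite (big_fsetD1 _ jG) /= big1_seq ?addr0.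
      by rewrite /e eqxx mulr1 /s; case: ifP; rewrite ?normrN normr1.
    move=> i /andP[_]; rewrite !inE => /andP[ij _].
    by rewrite /e (negbTE ij) mulr0.
  rewrite big1_seq ?normr0 // => i /andP[_ iG].
  rewrite /e; case: eqP => [ij|_]; last by rewrite mulr0.
  by move: jG; rewrite -ij iG.
have key : RE w a - RE w b = \sum_(i <- G) `|RE (e i) a - RE (e i) b|.
  rewrite /w expand -sumrB; apply: eq_bigr => i _.
  rewrite -mulrBr /s; case: ifP => h.
    by rewrite mul1r ger0_norm.
  by rewrite mulN1r ltr0_norm // ltNge h.
rewrite -mulr_suml -key.
have [C' hC'] := (Rlip _ wb).2.
have dip : 0 <= (d a b)^-1 by rewrite invr_ge0 ltW.
apply: le_trans (ler_wpM2r dip (ler_norm _)) _.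
apply: le_trans (lipnorm_ub hd hC' ab) _.
apply: le_trans Ropn; apply: ub_le_sup; last by exists w.
exists `|C| => _ [v [bv lv] <-]; apply: le_trans (RC v bv) _.
have := linf_ge0 bv; have := ler_norm C; have := normr_ge0 C; nra.
Qed.
End Extract.

Section HahnBanach.
Context {R : realType} {E : normedModType R}.
Definition gclosed (A : set (E * R)) :=
  forall a p q, A p -> A q -> A (a *: p.1 + q.1, a * p.2 + q.2).
Definition gdom (A : set (E * R)) := forall p, A p -> p.2 <= `|p.1|.
Definition PP (e : E) (A : set (E * R)) :=
  [/\ gclosed A, gdom A & forall p, A p -> A (e, `|e|)].

Lemma hahn_banach (e : E) : exists phi : E -> R,
  [/\ (forall a u v, phi (a *: u + v) = a * phi u + phi v),
      (forall z, `|phi z| <= `|z|) & phi e = `|e|].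
Proof.
have chain : forall F : set (set (E * R)), F `<=` PP e -> total_on F subset ->
    PP e (\bigcup_(X in F) X).
  move=> F FP Ftot; split.
  - move=> a p q [X FX Xp] [Y FY Yq].
    have [XY|YX] := Ftot _ _ FX FY.
      by exists Y => //; case: (FP _ FY) => cl _ _; apply: cl => //; exact: XY.
    by exists X => //; case: (FP _ FX) => cl _ _; apply: cl => //; exact: YX.
  - by move=> p [X FX Xp]; case: (FP _ FX) => _ dm _; exact: dm.
  - by move=> p [X FX Xp]; exists X => //; case: (FP _ FX) => _ _ h; exact: h Xp.
have [A [[Acl Adm Ae] Amax]] := Zorn_bigcup chain.
pose L := [set p : E * R | exists t : R, p = (t *: e, t * `|e|)].
have PL : PP e L.
  split.
  - move=> a p q [t ->] [t' ->] /=; exists (a * t + t').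
    by rewrite scalerDl scalerA mulrDl mulrA.
  - move=> p [t ->] /=; rewrite normrZ.
    by apply: ler_wpM2r => //; exact: ler_norm.
  - by move=> p _; exists 1; rewrite scale1r mul1r.
have [p0 Ap0] : exists p, A p.
  apply: contrapT => nA.
  apply: (Amax L) => //; split.
    by move=> p Ap; exfalso; apply: nA; exists p.
  move=> sub; apply: nA; exists (0, 0); apply: sub; exists 0.
  by rewrite scale0r mul0r.
have A0 : A (0, 0).
  have := Acl (-1) p0 p0 Ap0 Ap0.
  by rewrite scaleN1r mulN1r !addNr.
have AeE := Ae _ Ap0.
have Afun : forall u s t, A (u, s) -> A (u, t) -> s = t.
  move=> u s t hs ht.
  have h1 := Adm _ (Acl (-1) _ _ ht hs).
  have h2 := Adm _ (Acl (-1) _ _ hs ht).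
  move: h1 h2; rewrite /= scaleN1r addNr normr0 => h1 h2.
  lra.
have AZ : forall a u s, A (u, s) -> A (a *: u, a * s).
  by move=> a u s hu; have := Acl a _ _ hu A0; rewrite /= !addr0.
have total : forall z, exists s, A (z, s).
  move=> z0; apply: contrapT => nz.
  pose S := [set p.2 - `|p.1 - z0| | p in A].
  have hS : has_sup S.
    split; first by exists (0 - `|0 - z0|); exists (0, 0).
    exists `|z0| => _ [[u s] Aus <-] /=.
    have := Adm _ Aus; rewrite /= => hs.
    have := ler_normD (u - z0) z0; rewrite subrK => ht.
    lra.
  pose c := sup S.
  have cub : forall w r, A (w, r) -> c <= `|w + z0| - r.
    move=> w r Awr; apply: ge_sup; first by case: hS.
    move=> _ [[u s] Aus <-] /=.
    have := Adm _ (Acl 1 _ _ Aus Awr); rewrite /= scale1r mul1r => h.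
    have := ler_normD (u - z0) (w + z0).
    rewrite addrACA addNr addr0 => h2.
    lra.
  have clb : forall w r, A (w, r) -> r - `|w - z0| <= c.
    by move=> w r Awr; apply: ub_le_sup; [case: hS|exists (w, r)].
  pose B := [set p : E * R | exists q t, A q /\ p = (q.1 + t *: z0, q.2 + t * c)].
  apply: (Amax B).
    split.
      by move=> [u s] Aus; exists (u, s), 0; rewrite scale0r mul0r !addr0.
    move=> sub; apply: nz; exists c; apply: sub; exists (0, 0), 1.
    by rewrite scale1r mul1r !add0r.
  split.
  - move=> a p q [q1 [t1 [Aq1 ->]]] [q2 [t2 [Aq2 ->]]] /=.
    exists (a *: q1.1 + q2.1, a * q1.2 + q2.2), (a * t1 + t2); split.
      exact: Acl.
    congr (_, _) => /=.
      by rewrite scalerDr scalerA scalerDl addrACA.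
    by rewrite mulrDr mulrA mulrDl addrACA.
  - move=> p [[u s] [t [Aus ->]]] /=.
    have [t0|tn0] := eqVneq t 0.
      by rewrite t0 scale0r mul0r !addr0; exact: (Adm _ Aus).
    have Aw := AZ t^-1 _ _ Aus.
    have Awn := AZ (-1) _ _ Aw.
    set w := t^-1 *: u in Aw Awn; set r := t^-1 * s in Aw Awn.
    have hu : u = t *: w by rewrite /w scalerA mulfV // scale1r.
    have hs : s = t * r by rewrite /r mulrA mulfV // mul1r.
    rewrite hu hs -mulrDr -scalerDr normrZ.
    have h1 := cub _ _ Aw.
    have h2 := clb _ _ Awn.
    move: h2; rewrite scaleN1r -opprD normrN mulN1r => h2.
    have [tp|tn] := ltrP 0 t.
      rewrite gtr0_norm //; nra.
    have tneg : t < 0 by rewrite lt_neqAle tn0 tn.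
    rewrite ltr0_norm //; nra.
  - by move=> p _; exists (e, `|e|), 0; rewrite scale0r mul0r !addr0.
pose phi := fun z => projT1 (cid (total z)).
have Aphi : forall z, A (z, phi z) by move=> z; rewrite /phi; case: cid.
exists phi; split.
- move=> a u v; apply: (Afun (a *: u + v)); first exact: Aphi.
  exact: (Acl a (u, phi u) (v, phi v)).
- move=> z; rewrite ler_norml; apply/andP; split.
    have := Adm _ (AZ (-1) _ _ (Aphi z)); rewrite /= scaleN1r normrN; lra.
  exact: (Adm _ (Aphi z)).
- exact: (Afun e _ _ (Aphi e) AeE).
Qed.
End HahnBanach.

Unset Implicit Arguments.
Theorem proposition5p2 (R : realType) (X : Type) (d : X -> X -> R) (x0 : X)
    (I : choiceType) (x y : I -> X) (M : R) :
  is_metric d ->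
  (forall i, x i <> y i) ->
  lip_interpolating d x0 (R^o) x y ->
  M = interp_const d x0 x y ->
  (beurling_set d x0 x y M <->
     (forall E : completeNormedModType R,
        has_linear_extension d x0 E x y M)) /\
  (beurling_set d x0 x y M ->
     forall E : completeNormedModType R,
       lip_interpolating d x0 E x y /\
       ((exists i : I, True) -> (exists e : E, e != 0) ->
          interp_constE d x0 E x y = M)).
Proof.
move=> hd hxy hint hM.
have dge0 : forall a b, 0 <= d a b by case: hd.
have M0 : 0 <= M.
  rewrite hM /interp_const; set S := [set K | _].
  have [[k Sk]|nS] := pselect (S !=set0).
    apply: (@le_trans _ _ 1) => //; apply: lb_le_inf; first by exists k.
    by move=> K [].
  rewrite (_ : S = set0) ?inf0 //.
  by apply/seteqP; split => // z Sz; exfalso; apply: nS; exists z.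
have partA : beurling_set d x0 x y M ->
    forall E : completeNormedModType R, has_linear_extension d x0 E x y M.
  by case=> f [f0 [fxy fsum]] E; exact: (beurling_ext hd hxy M0 f0 fxy fsum E).
split; first by split => [|h]; [exact: partA|exact: (ext_beurling hd (h R^o))].
move=> hB E; have [RE [Rlip [_ [[C RC] [Ropn RTE]]]]] := partA hB E.
split; first by move=> v bv; exists (RE v); split; [exact: Rlip|exact: RTE].
move=> [i0 _] [e ne].
have M1 : 1 <= M.
  case: hB => f [f0 [fxy fsum]].
  have := fsum _ _ (hxy i0); rewrite -lee_fin => h; apply: le_trans h.
  apply: esum_ge; exists [set i0]; first by split => //; exact: finite_set1.
  rewrite fsbig_set1 lee_fin.
  have dp := d_gt0 hd (hxy i0).
  rewrite -(gtr0_norm dp) -normfV -normrM.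
  by rewrite (_ : _ * _ = (f i0 (x i0) - f i0 (y i0)) / d (x i0) (y i0)) ?fxy ?eqxx ?normr1.
have Mmem : [set K : R | 0 < K /\
        forall v : I -> E, bdd_family v -> linfnorm v <= 1 ->
          exists f : X -> E, lip0 d x0 f /\ lipnorm d f <= K /\ TE d x y f = v] M.
  split; first by apply: lt_le_trans M1.
  move=> v bv lv; exists (RE v); split; first exact: Rlip.
  split; last exact: RTE.
  by apply: le_trans Ropn; exact: (opnorm_ub RC bv lv).
have [phi [phil phin phie]] := hahn_banach e.
have phi0 : phi 0 = 0.
  have := phil (-1) 0 0; rewrite scaleN1r oppr0 addr0 => h; lra.
have phiZ : forall a u, phi (a *: u) = a * phi u.
  by move=> a u; have := phil a u 0; rewrite !addr0 phi0 addr0.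
have phiB : forall u v, phi (u - v) = phi u - phi v.
  by move=> u v; have := phil (-1) v u; rewrite scaleN1r mulN1r (addrC (- v)) (addrC (- phi v)).
have ne0 : `|e| != 0 by rewrite normr_eq0.
pose e1 := `|e|^-1 *: e.
have phie1 : phi e1 = 1 by rewrite phiZ phie mulVf.
have ne1 : `|e1| = 1 by rewrite normrZ normfV normr_id mulVf.
have scal : forall K : R, 0 < K -> (forall v : I -> E, bdd_family v -> linfnorm v <= 1 ->
          exists f : X -> E, lip0 d x0 f /\ lipnorm d f <= K /\ TE d x y f = v) ->
    forall alpha : I -> R^o, bdd_family alpha -> linfnorm alpha <= 1 ->
          exists f : X -> R^o, lip0 d x0 f /\ lipnorm d f <= K /\ TE d x y f = alpha.
  move=> K K0 hK alpha [Ca hCa] la.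
  pose v := fun i => alpha i *: e1.
  have nv : forall i, `|v i| = `|alpha i| by move=> i; rewrite normrZ ne1 mulr1.
  have bv : bdd_family v by exists Ca => i; rewrite nv.
  have lv : linfnorm v <= 1.
    apply: linf_le => // i; rewrite nv; apply: le_trans la.
    by apply: linf_ub; exists Ca.
  have [g [[g0 [Cg hCg]] [gK gTE]]] := hK v bv lv.
  exists (fun p => (phi (g p) : R^o)); split; [split|split].
  - by rewrite g0 phi0.
  - exists Cg => a b; rewrite -phiB; apply: le_trans (phin _) _; exact: hCg.
  - apply: lipnorm_le => //; first exact: ltW.
    move=> a b; rewrite -phiB; apply: le_trans (phin _) _.
    apply: le_trans (lipnorm_ub' hd _ _ hCg) _.
    by apply: ler_wpM2r.
  - apply: funext => j; have := congr1 (fun h => h j) gTE; rewrite /TE /v /= => h.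
    rewrite -phiB; transitivity (phi ((d (x j) (y j))^-1 *: (g (x j) - g (y j)))); first by rewrite phiZ.
    by rewrite h phiZ phie1 mulr1.
apply/eqP; rewrite eq_le; apply/andP; split.
  apply: ge_inf => //; exists 0 => K [K0 _]; exact: ltW.
apply: lb_le_inf; first by exists M.
move=> K [K0 hK].
have K1 : 1 <= K.
  have b1 : bdd_family (fun _ : I => (1 : R^o)) by exists 1 => i; rewrite normr1.
  have l1 : linfnorm (fun _ : I => (1 : R^o)) <= 1.
    by apply: linf_le => // i; rewrite normr1.
  have [h [[h0 [Ch hCh]] [hK' hTE]]] := scal K K0 hK _ b1 l1.
  apply: le_trans hK'; apply: le_trans (lipnorm_ub hd hCh (hxy i0)).
  have := congr1 (fun g => g i0) hTE; rewrite /TE /= => h1.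
  have dp := d_gt0 hd (hxy i0).
  rewrite -(gtr0_norm dp) -normfV -normrM mulrC.
  by rewrite [X in `|X|]h1 normr1.
rewrite hM; apply: ge_inf; first by exists 1 => k [].
by split => //; exact: scal.
Qed.
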